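(* Let $K\subseteq L$ be an algebraic field extension, let $A$ be a PvMD with quotient field $K$, and let $B\supseteq A$ be an integrally closed essential domain with quotient field $L$. Suppose that $B$ admits an essential representation $\mathcal V$ such that for every $V\in\mathcal V$ the center $\mathfrak m_V\cap A$ of $V$ in $A$ (where $\mathfrak m_V$ is the maximal ideal of $V$) is a $t$-ideal of $A$. Then $B$ is a PvMD.
   Context: All rings are commutative with identity. For an integral domain $D$ with quotient field $F$ and nonzero fractional ideal $I$: $(D:I)=\{x\in F:xI\subseteq D\}$, $I^v=(D:(D:I))$, $I^t=\bigcup\{J^v:J\subseteq I \text{ finitely generated}\}$; $I$ is a $t$-ideal if $I=(0)$ or $I=I^t$; $t$-maximal ideals are $t$-ideals maximal among proper $t$-ideals. $D$ is a PvMD if $D_{\mathfrak m}$ is a valuation domain for all $t$-maximal $\mathfrak m$. A valuation overring of $D$ is essential if it equals $D_{\mathfrak p}$ for a prime $\mathfrak p$ of $D$; an essential representation of $D$ is a family of essential valuation overrings with intersection $D$; $D$ is essential if it has one. *)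

(* Defs.v *)
(* Integral domains are modelled as subrings of a field L
   (predicates L -> Prop); the quotient field of D is the set of fractions
   a/b (a, b in D, b <> 0) inside L. *)
From HB Require Import structures.
From mathcomp Require Import all_boot all_algebra.
Set Implicit Arguments. Unset Strict Implicit. Unset Printing Implicit Defensive.
Import GRing.Theory.
Local Open Scope ring_scope.

Section Defs.
Variable L : fieldType.
Implicit Types (D V I J P M N K : L -> Prop).

Definition subring D :=
  D 0 /\ D 1 /\ (forall x y, D x -> D y -> D (x - y)) /\
  (forall x y, D x -> D y -> D (x * y)).

Definition qf D (x : L) := exists a b, D a /\ D b /\ b != 0 /\ x = a / b.

Definition ideal D I :=
  (forall x, I x -> D x) /\ I 0 /\ (forall x y, I x -> I y -> I (x + y)) /\
  (forall d x, D d -> I x -> I (d * x)).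

Definition proper_ideal D I := ideal D I /\ ~ I 1.

Definition prime_ideal D P :=
  proper_ideal D P /\ forall x y, D x -> D y -> P (x * y) -> P x \/ P y.

Definition fg_ideal D (s : seq L) (x : L) :=
  exists c : seq L, size c = size s /\ (forall i, D c`_i) /\
    x = \sum_(i < size s) c`_i * s`_i.

Definition colon D I (x : L) := qf D x /\ forall y, I y -> D (x * y).

Definition vclosure D I := colon D (colon D I).

Definition tclosure D I (x : L) :=
  exists s : seq L, (forall y, y \in s -> I y) /\ vclosure D (fg_ideal D s) x.

Definition t_ideal D I :=
  (forall x, I x <-> x = 0) \/ (forall x, I x <-> tclosure D I x).

Definition t_maximal D M :=
  proper_ideal D M /\ t_ideal D M /\
  forall N, proper_ideal D N -> t_ideal D N ->
    (forall x, M x -> N x) -> forall x, N x -> M x.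

Definition localization D P (x : L) :=
  exists a s, D a /\ D s /\ ~ P s /\ x = a / s.

Definition valuation_in (F V : L -> Prop) :=
  forall x, F x -> x != 0 -> V x \/ V x^-1.

Definition PvMD D :=
  subring D /\ forall M, t_maximal D M -> valuation_in (qf D) (localization D M).

Definition valuation_overring D V :=
  subring V /\ (forall x, D x -> V x) /\ (forall x, V x -> qf D x) /\
  valuation_in (qf D) V.

Definition essential_valuation_overring D V :=
  valuation_overring D V /\
  exists P, prime_ideal D P /\ forall x, V x <-> localization D P x.

(* intersection taken inside the quotient field (empty family gives qf D) *)
Definition essential_representation D (Vs : (L -> Prop) -> Prop) :=
  (forall V, Vs V -> essential_valuation_overring D V) /\
  forall x, D x <-> (qf D x /\ forall V, Vs V -> V x).

Definition essential_domain D :=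
  subring D /\ exists Vs, essential_representation D Vs.

Definition integrally_closed D :=
  forall x, qf D x ->
    (exists p : {poly L}, p \is monic /\ (forall i, D p`_i) /\ root p x) -> D x.

Definition val_max_ideal V (x : L) := V x /\ (x = 0 \/ ~ V x^-1).

Definition algebraic_over K :=
  forall x : L, exists p : {poly L}, p != 0 /\ (forall i, K p`_i) /\ root p x.

End Defs.

(* Main.v *)
Require Import Defs.
From mathcomp Require Import all_boot all_algebra.
From mathcomp Require Import boolp classical_sets.
From Stdlib Require Import Classical.
From mathcomp Require Import ring.
Set Implicit Arguments. Unset Strict Implicit. Unset Printing Implicit Defensive.
Import GRing.Theory.
Local Open Scope ring_scope.


Section Basics.
Variable L : fieldType.
Variable D : L -> Prop.
Hypothesis hD : subring D.

Lemma D0 : D 0. Proof. by case: hD. Qed.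
Lemma D1 : D 1. Proof. by case: hD => _ []. Qed.
Lemma DB x y : D x -> D y -> D (x - y). Proof. by case: hD => _ [_ [H _]]; apply: H. Qed.
Lemma DM x y : D x -> D y -> D (x * y). Proof. by case: hD => _ [_ [_ H]]; apply: H. Qed.
Lemma DN x : D x -> D (- x).
Proof. by move=> Hx; have := DB D0 Hx; rewrite sub0r. Qed.
Lemma DD x y : D x -> D y -> D (x + y).
Proof. by move=> Hx Hy; rewrite -[y]opprK; apply: DB => //; apply: DN. Qed.
Lemma DX x n : D x -> D (x ^+ n).
Proof. move=> Hx; elim: n => [|n IH]; first by rewrite expr0; apply: D1.
by rewrite exprS; apply: DM. Qed.
Lemma Dsum (I : Type) (r : seq I) (P : pred I) (F : I -> L) :
  (forall i, P i -> D (F i)) -> D (\sum_(i <- r | P i) F i).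
Proof. by move=> HF; apply: big_ind => //; [apply: D0 | apply: DD]. Qed.

Lemma qfD x : D x -> qf D x.
Proof. by move=> Hx; exists x, 1; rewrite divr1; split=> //; split; [apply: D1|rewrite oner_eq0]. Qed.

Lemma qf_add x y : qf D x -> qf D y -> qf D (x + y).
Proof.
move=> [a [b [Ha [Hb [b0 ->]]]]] [c [d [Hc [Hd [d0 ->]]]]].
exists (a * d + c * b), (b * d); split; first by apply: DD; apply: DM.
split; first by apply: DM. split; first by rewrite mulf_neq0.
by field; apply/andP.
Qed.

Lemma qf_mul x y : qf D x -> qf D y -> qf D (x * y).
Proof.
move=> [a [b [Ha [Hb [b0 ->]]]]] [c [d [Hc [Hd [d0 ->]]]]].
exists (a * c), (b * d); split; first by apply: DM.
split; first by apply: DM. split; first by rewrite mulf_neq0.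
by field; apply/andP.
Qed.

Lemma qf_div a b : D a -> D b -> qf D (a / b).
Proof.
move=> Ha Hb; have [->|b0] := eqVneq b 0.
  by rewrite invr0 mulr0; apply: qfD; apply: D0.
by exists a, b.
Qed.

Lemma fg_mem s y : y \in s -> fg_ideal D s y.
Proof.
move=> ys; set k := index y s.
have ks : (k < size s)%N by rewrite index_mem.
exists (mkseq (fun i => if i == k then 1 else 0) (size s)).
split; first by rewrite size_mkseq.
split.
  move=> i; have [hi|hi] := ltnP i (size s).
    by rewrite nth_mkseq //; case: ifP => _; [apply: D1|apply: D0].
  by rewrite nth_default ?size_mkseq //; apply: D0.
rewrite (bigD1 (Ordinal ks)) //= nth_mkseq // eqxx mul1r nth_index //.
rewrite big1 ?addr0 // => i /= hi.
rewrite nth_mkseq //; case: ifP; last by rewrite mul0r.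
by move=> /eqP hik; move: hi; rewrite -val_eqE /= hik eqxx.
Qed.

Lemma colon_fg s u : colon D (fg_ideal D s) u <-> qf D u /\ forall y, y \in s -> D (u * y).
Proof.
split.
  by move=> [qu Hu]; split=> // y ys; apply: Hu; apply: fg_mem.
move=> [qu Hu]; split=> // z [c [_ [Hc ->]]].
rewrite mulr_sumr; apply: Dsum => i _.
by rewrite mulrCA; apply: DM => //; apply: Hu; apply: mem_nth.
Qed.

Definition vcl s := vclosure D (fg_ideal D s).

Lemma vcl_mem s z : z \in s -> D z -> vcl s z.
Proof.
move=> zs Dz; split; first by apply: qfD.
by move=> u [_ Hu]; rewrite mulrC; apply: Hu; apply: fg_mem.
Qed.

Lemma vmono s s' y : (forall z, z \in s -> vcl s' z) -> vcl s y -> vcl s' y.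
Proof.
move=> Hs [qy Hy]; split=> // u Hu; apply: Hy.
apply/colon_fg; split; first by case: Hu.
by move=> z zs; rewrite mulrC; case: (Hs z zs) => _; apply.
Qed.

Lemma vcl0 s : vcl s 0.
Proof. by split; [apply: qfD; apply: D0 | move=> u _; rewrite mul0r; apply: D0]. Qed.

Lemma vcl_add s y z : vcl s y -> vcl s z -> vcl s (y + z).
Proof.
move=> [qy Hy] [qz Hz]; split; first by apply: qf_add.
by move=> u Hu; rewrite mulrDl; apply: DD; [apply: Hy|apply: Hz].
Qed.

Lemma vcl_mul s d y : D d -> vcl s y -> vcl s (d * y).
Proof.
move=> Dd [qy Hy]; split; first by apply: qf_mul => //; apply: qfD.
by move=> u Hu; rewrite -mulrA; apply: DM => //; apply: Hy.
Qed.

Lemma vcl_sub s y : (forall z, z \in s -> D z) -> vcl s y -> D y.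
Proof.
move=> Hs [_ Hy]; rewrite -[y]mulr1; apply: Hy.
apply/colon_fg; split; first by apply: qfD; apply: D1.
by move=> z zs; rewrite mul1r; apply: Hs.
Qed.

Lemma vcl_prod s1 s2 :
  (forall z, z \in s1 -> D z) -> (forall z, z \in s2 -> D z) ->
  vcl s1 1 -> vcl s2 1 -> vcl [seq a * b | a <- s1, b <- s2] 1.
Proof.
move=> H1 H2 [_ V1] [q1 V2]; split=> // u Hu.
have [qu Hu'] := (colon_fg _ _).1 Hu.
rewrite mul1r; have := V2 u; rewrite mul1r; apply.
apply/colon_fg; split=> // b bs2.
have := V1 (u * b); rewrite mul1r; apply.
apply/colon_fg; split; first by apply: qf_mul => //; apply: qfD; apply: H2.
move=> a as1; rewrite -mulrA [b * a]mulrC; apply: Hu'.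
by apply/allpairsP; exists (a, b).
Qed.

End Basics.


Section TMax.
Variable L : fieldType.
Variable D : L -> Prop.
Hypothesis hD : subring D.

Definition good (I J : L -> Prop) :=
  ideal D J /\ (forall x, I x -> J x) /\ ~ tclosure D J 1.

Lemma chain_fin (I : L -> Prop) (F : set (set L)) (X0 : L -> Prop) :
  total_on F subset -> F X0 -> (forall X, F X -> forall x, X x -> good I X) ->
  good I X0 ->
  forall s : seq L, (forall y, y \in s -> exists2 X, F X & X y) ->
  exists X, [/\ F X, good I X & forall y, y \in s -> X y].
Proof.
move=> tot FX0 Fg g0; elim=> [|a s IH] Hs.
  by exists X0; split => // y.
have [X [FX gX Xs]] : exists X, [/\ F X, good I X & forall y, y \in s -> X y].
  by apply: IH => y ys; apply: Hs; rewrite inE ys orbT.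
have [Y FY Ya] := Hs a (mem_head _ _).
have [XY|YX] := tot X Y FX FY.
- exists Y; split => //; first exact: (Fg Y FY a Ya).
  by move=> y; rewrite inE => /orP[/eqP->//|ys]; apply: XY; apply: Xs.
- exists X; split => // y; rewrite inE => /orP[/eqP->|ys]; last exact: Xs.
  by apply: YX.
Qed.

Lemma ext_ideal (N : L -> Prop) z : ideal D N -> D z ->
  ideal D (fun y => exists n d, N n /\ D d /\ y = n + d * z).
Proof.
move=> [NS [N0 [Nadd Nmul]]] Dz; split.
  by move=> y [n [d [Nn [Dd ->]]]]; apply: (DD hD); [apply: NS|apply: (DM hD)].
split; first by exists 0, 0; split=> //; split; [apply: (D0 hD)|rewrite !mul0r addr0].
split.
  move=> y y' [n [d [Nn [Dd ->]]]] [n' [d' [Nn' [Dd' ->]]]].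
  exists (n + n'), (d + d'); split; first exact: Nadd.
  by split; [apply: (DD hD)|ring].
move=> c y Dc [n [d [Nn [Dd ->]]]]; exists (c * n), (c * d); split; first exact: Nmul.
by split; [apply: (DM hD)|ring].
Qed.

Lemma ext_list (N : L -> Prop) z (s : seq L) :
  (forall y, y \in s -> exists n d, N n /\ D d /\ y = n + d * z) ->
  exists ns : seq L, (forall n, n \in ns -> N n) /\
    forall y, y \in s -> exists n d, n \in ns /\ D d /\ y = n + d * z.
Proof.
elim: s => [|a s IH] Hs; first by exists [::].
have [ns [Hns Hs']] : exists ns : seq L, (forall n, n \in ns -> N n) /\
    forall y, y \in s -> exists n d, n \in ns /\ D d /\ y = n + d * z.
  by apply: IH => y ys; apply: Hs; rewrite inE ys orbT.
have [n [d [Nn [Dd ea]]]] := Hs a (mem_head _ _).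
exists (n :: ns); split.
  by move=> m; rewrite inE => /orP[/eqP->//|]; apply: Hns.
move=> y; rewrite inE => /orP[/eqP->|ys].
  by exists n, d; rewrite mem_head.
have [m [e [ms [De ->]]]] := Hs' y ys.
by exists m, e; rewrite inE ms orbT.
Qed.

Lemma tcl_sub (N : L -> Prop) z : ideal D N -> tclosure D N z -> D z.
Proof.
move=> [NS _] [s [Hs Hv]]; apply: (vcl_sub hD) Hv => y ys.
by apply: NS; apply: Hs.
Qed.

Lemma ext_good I (N : L -> Prop) z : good I N -> tclosure D N z ->
  good I (fun y => exists n d, N n /\ D d /\ y = n + d * z).
Proof.
move=> [iN [IN nt]] tz.
have Dz := tcl_sub iN tz.
have [NS _] := iN.
split; first exact: ext_ideal.
split.
  by move=> x Ix; exists x, 0; split; [apply: IN|split; [apply: (D0 hD)|rewrite mul0r addr0]].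
move=> [s [Hs Hv]]; apply: nt.
have [s0 [Hs0 Hz]] := tz.
have [ns [Hns Hs']] := ext_list Hs.
exists (s0 ++ ns); split.
  by move=> y; rewrite mem_cat => /orP[]; [apply: Hs0|apply: Hns].
apply: (vmono hD) Hv => y ys.
have [n [d [nns [Dd ->]]]] := Hs' y ys.
apply: (vcl_add hD).
  by apply: (vcl_mem hD); [rewrite mem_cat nns orbT|apply: NS; apply: Hns].
apply: (vcl_mul hD) => //; apply: (vmono hD) Hz => w ws.
apply: (vcl_mem hD); first by rewrite mem_cat ws.
by apply: NS; apply: Hs0.
Qed.

Lemma exists_tmax (I : L -> Prop) : ideal D I -> (exists x, I x /\ x != 0) ->
  ~ tclosure D I 1 ->
  exists N, [/\ t_maximal D N, (forall x, I x -> N x) &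
    (forall x y, D x -> D y -> N (x * y) -> N x \/ N y)].
Proof.
move=> iI [x0 [Ix0 x00]] ntI.
have gI : good I I by split=> //; split.
pose P : set (set L) := fun J => J = set0 \/ good I J.
have Pgood X x : P X -> X x -> good I X.
  by case=> [->//|//].
have [N [PN maxN]] : exists A : set L, P A /\ (forall B : set L, (A `<` B)%classic -> ~ P B).
  apply: Zorn_bigcup => F FP Ftot.
  case: (classic (exists x, (\bigcup_(X in F) X)%classic x)); last first.
    move=> H; left; apply/funext => y; apply/propext; split=> // Uy.
    by apply: H; exists y.
  move=> [x [X FX Xx]]; right.
  have Fg : forall Y, F Y -> forall y, Y y -> good I Y.
    by move=> Y FY y Yy; apply: (Pgood Y y) => //; apply: FP.
  have gX := Fg X FX x Xx.
  have cf := chain_fin Ftot FX Fg gX.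
  split.
    split.
      move=> y [Y FY Yy]; have [[YS _] _] := Fg Y FY y Yy; exact: YS.
    split; first by exists X => //; case: gX => [[_ []]].
    split.
      move=> y z Uy Uz.
      have HY : forall w, w \in [:: y; z] -> (\bigcup_(X in F) X)%classic w.
        by move=> w; rewrite !inE => /orP[/eqP->|/eqP->].
      have [Y [FY gY Hy]] := cf _ HY.
      exists Y => //; case: gY => [[_ [_ [Yadd _]]] _].
      by apply: Yadd; apply: Hy; rewrite !inE eqxx ?orbT.
    move=> d y Dd [Y FY Yy]; exists Y => //.
    by have [[_ [_ [_ Ymul]]] _] := Fg Y FY y Yy; apply: Ymul.
  split; first by move=> y Iy; exists X => //; case: gX => _ [+ _]; apply.
  move=> [s [Hs Hv]].
  have [Y [FY [_ [_ ntY]] Hy]] := cf s Hs.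
  by apply: ntY; exists s.
have gN : good I N.
  case: PN => // N0; exfalso; apply: (maxN I); last by right.
  rewrite N0; split; first by [].
  by move=> H; have := H x0 Ix0.
have [iN [IN ntN]] := gN.
have [NS [N0 [Nadd Nmul]]] := iN.
have maxN' : forall J, good I J -> (forall y, N y -> J y) -> forall y, J y -> N y.
  move=> J gJ NJ; apply: NNPP => H; apply: (maxN J); last by right.
  by split.
have N1 : ~ N 1.
  move=> H; apply: ntN; exists [:: 1]; split; first by move=> y; rewrite inE => /eqP->.
  by apply: (vcl_mem hD); [rewrite mem_head|apply: (D1 hD)].
have tN : forall z, tclosure D N z -> N z.
  move=> z tz; apply: (maxN' _ (ext_good gN tz)).
    by move=> y Ny; exists y, 0; split=> //; split; [apply: (D0 hD)|rewrite mul0r addr0].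
  exists 0, 1; split=> //; split; [apply: (D1 hD)|by rewrite add0r mul1r].
exists N; split => //.
- split; first by split.
  split.
    right=> z; split; last exact: tN.
    move=> Nz; exists [:: z]; split; first by move=> y; rewrite inE => /eqP->.
    by apply: (vcl_mem hD); [rewrite mem_head|apply: NS].
  move=> J [iJ J1] tJ NJ; apply: (maxN' J) => //; split => //; split.
    by move=> y Iy; apply: NJ; apply: IN.
  move=> tJ1; case: tJ => tJ.
    by have := (tJ x0).1 (NJ _ (IN _ Ix0)); move/eqP: x00.
  by apply: J1; apply/tJ.
- move=> x y Dx Dy Nxy; apply: NNPP => H.
  have [Nx Ny] : ~ N x /\ ~ N y by split=> H'; apply: H; [left|right].
  have tx : tclosure D (fun w => exists n d, N n /\ D d /\ w = n + d * x) 1.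
    apply: NNPP => H'; apply: Nx; apply: (maxN' (fun w => exists n d, N n /\ D d /\ w = n + d * x)).
    - split; first exact: ext_ideal.
      split=> //; by move=> w Iw; exists w, 0; split; [apply: IN|split; [apply: (D0 hD)|rewrite mul0r addr0]].
    - by move=> w Nw; exists w, 0; split=> //; split; [apply: (D0 hD)|rewrite mul0r addr0].
    - by exists 0, 1; split=> //; split; [apply: (D1 hD)|rewrite add0r mul1r].
  have ty : tclosure D (fun w => exists n d, N n /\ D d /\ w = n + d * y) 1.
    apply: NNPP => H'; apply: Ny; apply: (maxN' (fun w => exists n d, N n /\ D d /\ w = n + d * y)).
    - split; first exact: ext_ideal.
      split=> //; by move=> w Iw; exists w, 0; split; [apply: IN|split; [apply: (D0 hD)|rewrite mul0r addr0]].
    - by move=> w Nw; exists w, 0; split=> //; split; [apply: (D0 hD)|rewrite mul0r addr0].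
    - by exists 0, 1; split=> //; split; [apply: (D1 hD)|rewrite add0r mul1r].
  have [s1 [H1 V1]] := tx; have [s2 [H2 V2]] := ty.
  have D1s : forall w, w \in s1 -> D w.
    move=> w /H1 [n [d [Nn [Dd ->]]]]; apply: (DD hD); [exact: NS|exact: (DM hD)].
  have D2s : forall w, w \in s2 -> D w.
    move=> w /H2 [n [d [Nn [Dd ->]]]]; apply: (DD hD); [exact: NS|exact: (DM hD)].
  apply: ntN; exists [seq a * b | a <- s1, b <- s2]; split; last exact: (vcl_prod hD).
  move=> w /allpairsP [[a b] [as1 bs2 ->]] /=.
  have [n [d [Nn [Dd ea]]]] := H1 a as1.
  have [n' [d' [Nn' [Dd' eb]]]] := H2 b bs2.
  have -> : a * b = b * n + (d * n') * x + (d * d') * (x * y).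
    by rewrite ea eb; ring.
  apply: (Nadd); [apply: (Nadd)|].
  + by apply: (Nmul) => //; apply: D2s.
  + by rewrite mulrC; apply: (Nmul) => //; apply: (Nmul).
  + by apply: (Nmul) => //; apply: (DM hD).
Qed.

End TMax.


Lemma sum_ind (L : fieldType) (n j : nat) (w : L) (a : nat -> L) : (j < n)%N ->
  \sum_(i < n) (if (i : nat) == j then w else 0) * a i = w * a j.
Proof.
move=> hj; rewrite (bigD1 (Ordinal hj)) //= eqxx big1 ?addr0 // => i /= hi.
case: ifP; last by rewrite mul0r.
by move=> /eqP hij; move: hi; rewrite -val_eqE /= hij eqxx.
Qed.

Section ASide.
Variable L : fieldType.
Variable A : L -> Prop.
Hypothesis hA : subring A.
Hypothesis pA : PvMD A.
Variable a : nat -> L.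
Variable n : nat.
Hypothesis Ha : forall i, A (a i).
Hypothesis nz : exists i, (i < n)%N /\ a i != 0.

Definition W w := qf A w /\ forall i, (i < n)%N -> A (w * a i).
Definition T z := exists wf : nat -> L, (forall i, W (wf i)) /\ z = \sum_(i < n) wf i * a i.

Lemma W0 : W 0.
Proof. by split; [apply: (qfD hA); apply: (D0 hA)|move=> i _; rewrite mul0r; apply: (D0 hA)]. Qed.
Lemma W1 : W 1.
Proof. by split; [apply: (qfD hA); apply: (D1 hA)|move=> i _; rewrite mul1r]. Qed.
Lemma Wadd w w' : W w -> W w' -> W (w + w').
Proof.
move=> [q H] [q' H']; split; first exact: (qf_add hA).
by move=> i hi; rewrite mulrDl; apply: (DD hA); [apply: H|apply: H'].
Qed.
Lemma Wmul d w : A d -> W w -> W (d * w).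
Proof.
move=> Ad [q H]; split; first by apply: (qf_mul hA) => //; apply: (qfD hA).
by move=> i hi; rewrite -mulrA; apply: (DM hA) => //; apply: H.
Qed.

Lemma T_ideal : ideal A T.
Proof.
split.
  move=> z [wf [Hw ->]]; apply: (Dsum hA) => i _; exact: (proj2 (Hw i)).
split; first by exists (fun=> 0); split=> [i|]; [apply: W0|rewrite big1 // => i _; rewrite mul0r].
split.
  move=> y z [wf [Hw ->]] [wf' [Hw' ->]]; exists (fun i => wf i + wf' i); split.
    by move=> i; apply: Wadd.
  by rewrite -big_split /=; apply: eq_bigr => i _; rewrite mulrDl.
move=> d z Ad [wf [Hw ->]]; exists (fun i => d * wf i); split.
  by move=> i; apply: Wmul.
by rewrite mulr_sumr; apply: eq_bigr => i _; rewrite mulrA.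
Qed.

Lemma T_ind w j : W w -> (j < n)%N -> T (w * a j).
Proof.
move=> Ww hj; exists (fun i => if i == j then w else 0); split.
  by move=> i; case: ifP => _ //; apply: W0.
by rewrite sum_ind.
Qed.

Lemma T_list (s : seq L) : (forall y, y \in s -> T y) ->
  exists ws : seq L, (forall w, w \in ws -> W w) /\
   forall Q : L -> Prop, Q 0 -> (forall x y, Q x -> Q y -> Q (x + y)) ->
     (forall w i, w \in ws -> (i < n)%N -> Q (w * a i)) -> forall y, y \in s -> Q y.
Proof.
elim: s => [|z s IH] Hs; first by exists [::]; split.
have [ws [Hws HQ]] : exists ws : seq L, (forall w, w \in ws -> W w) /\
   forall Q : L -> Prop, Q 0 -> (forall x y, Q x -> Q y -> Q (x + y)) ->
     (forall w i, w \in ws -> (i < n)%N -> Q (w * a i)) -> forall y, y \in s -> Q y.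
  by apply: IH => y ys; apply: Hs; rewrite inE ys orbT.
have [wf [Hwf ez]] := Hs z (mem_head _ _).
exists (mkseq wf n ++ ws); split.
  move=> w; rewrite mem_cat => /orP[/mapP [i _ ->]|]; [exact: Hwf|exact: Hws].
move=> Q Q0 Qadd Hq y; rewrite inE => /orP[/eqP->|ys].
  rewrite ez; apply: big_ind => // i _; apply: Hq => //.
  by rewrite mem_cat /mkseq map_f // mem_iota add0n ltn_ord.
apply: HQ => // w i wws hi; apply: Hq => //.
by rewrite mem_cat wws orbT.
Qed.

Section Case2.
Variable N : L -> Prop.
Hypothesis tN : t_maximal A N.
Hypothesis TN : forall x, T x -> N x.
Hypothesis pN : forall x y, A x -> A y -> N (x * y) -> N x \/ N y.

Let loc := localization A N.
Let iN : ideal A N. Proof. by case: tN => [[]]. Qed.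
Let N1 : ~ N 1. Proof. by case: tN => [[]]. Qed.
Let N0 : N 0. Proof. by case: iN => _ []. Qed.
Let vN : valuation_in (qf A) loc. Proof. by apply: pA.2. Qed.

Let loc0 : loc 0.
Proof. by exists 0, 1; split; [apply: (D0 hA)|split; [apply: (D1 hA)|split=> //; rewrite mul0r]]. Qed.
Let loc1 : loc 1.
Proof. by exists 1, 1; split; [apply: (D1 hA)|split; [apply: (D1 hA)|split=> //; rewrite divr1]]. Qed.
Let loc_mul x y : loc x -> loc y -> loc (x * y).
Proof.
move=> [r [s [Ar [As [Ns ->]]]]] [r' [s' [Ar' [As' [Ns' ->]]]]].
exists (r * r'), (s * s'); split; first exact: (DM hA).
split; first exact: (DM hA).
split; first by case/(pN As As').
by rewrite invfM; ring.
Qed.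

Lemma min_idx : exists j, [/\ (j < n)%N, a j != 0 & forall i, (i < n)%N -> loc (a i / a j)].
Proof.
suff H : forall m, (exists i, (i < m)%N /\ a i != 0) ->
   exists j, [/\ (j < m)%N, a j != 0 & forall i, (i < m)%N -> loc (a i / a j)].
  exact: H.
elim=> [|m IH] [i0 [hi0 ai0]]; first by [].
case: (classic (exists i, (i < m)%N /\ a i != 0)) => [Hm|Hm].
  have [j [hj aj Hj]] := IH Hm.
  have [am0|am0] := eqVneq (a m) 0.
    exists j; split => //; first exact: ltnW.
    move=> i; rewrite ltnS leq_eqVlt => /orP[/eqP->|hi]; last exact: Hj.
    by rewrite am0 mul0r.
  have q : qf A (a m / a j) by apply: (qf_div hA).
  have [H|H] := vN q (mulf_neq0 am0 (invr_neq0 aj)).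
    exists j; split => //; first exact: ltnW.
    by move=> i; rewrite ltnS leq_eqVlt => /orP[/eqP->|hi]; last exact: Hj.
  exists m; split => //.
  move=> i; rewrite ltnS leq_eqVlt => /orP[/eqP->|hi]; first by rewrite divff.
  have -> : a i / a m = (a i / a j) * (a m / a j)^-1 by field; apply/andP.
  by apply: loc_mul => //; apply: Hj.
have am : a m != 0.
  move: hi0; rewrite ltnS leq_eqVlt => /orP[/eqP<-//|hi].
  by exfalso; apply: Hm; exists i0.
exists m; split => //.
move=> i; rewrite ltnS leq_eqVlt => /orP[/eqP->|hi]; first by rewrite divff.
case: (eqVneq (a i) 0) => [->|ai]; first by rewrite mul0r.
by exfalso; apply: Hm; exists i.
Qed.

Lemma case2_false : False.
Proof.
have [j [hj aj Hj]] := min_idx.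
have [S [AS NS HS]] : exists S, [/\ A S, ~ N S & forall i, (i < n)%N -> A (S * (a i / a j))].
  suff H : forall m, exists S, [/\ A S, ~ N S & forall i, (i < m)%N -> (i < n)%N -> A (S * (a i / a j))].
    have [S [AS NS HS]] := H n; exists S; split => // i hi; exact: HS.
  elim=> [|m [S [AS NS HS]]]; first by exists 1; split => //; apply: (D1 hA).
  case: (ltnP m n) => hm; last first.
    exists S; split => // i hi hin; apply: HS => //.
    exact: leq_trans hin hm.
  have [r [t [Ar [At [Nt ert]]]]] := Hj m hm.
  have t0 : t != 0 by apply/eqP => t0; apply: Nt; rewrite t0.
  exists (S * t); split; first exact: (DM hA).
    by move=> /(pN AS At) [].
  move=> i; rewrite ltnS leq_eqVlt => /orP[/eqP->|hi] hin.
    rewrite ert; have -> : S * t * (r / t) = S * r by field.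
    exact: (DM hA) AS Ar.
  by rewrite mulrAC; apply: (DM hA) => //; apply: HS.
have Wd : W (S / a j).
  split; first exact: (qf_div hA).
  move=> i hi; have -> : S / a j * a i = S * (a i / a j) by field.
  exact: HS.
have := TN (T_ind Wd hj); rewrite divfK //.
Qed.
End Case2.

Lemma A_claim : exists ws : seq L, (forall w, w \in ws -> W w) /\
  forall Q : L -> Prop, Q 0 -> (forall x y, Q x -> Q y -> Q (x + y)) -> t_ideal A Q -> ~ Q 1 ->
  exists w i, [/\ w \in ws, (i < n)%N & ~ Q (w * a i)].
Proof.
case: (classic (tclosure A T 1)) => [[s [Hs Hv]]|nt]; last first.
  exfalso; have [i0 [hi0 ai0]] := nz.
  have ex0 : exists x, T x /\ x != 0.
    by exists (1 * a i0); split; [exact: T_ind W1 hi0|rewrite mul1r].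
  have [N [tN TN pN]] := exists_tmax hA T_ideal ex0 nt.
  exact: case2_false tN TN pN.
have [ws [Hws HQ]] := T_list Hs.
exists (1 :: ws); split.
  move=> w; rewrite inE => /orP[/eqP->|]; [exact: W1|exact: Hws].
move=> Q Q0 Qadd tQ Q1; apply: NNPP => H.
have Hall : forall w i, w \in 1 :: ws -> (i < n)%N -> Q (w * a i).
  move=> w i wws hi; apply: NNPP => nQ; apply: H; exists w, i; split => //.
have Qs : forall y, y \in s -> Q y.
  apply: HQ => // w i wws hi; by apply: (Hall) => //; rewrite inE wws orbT.
case: tQ => tQ.
  have [i0 [hi0 ai0]] := nz.
  have := (tQ _).1 (Hall 1 i0 (mem_head _ _) hi0); rewrite mul1r => /eqP.
  by rewrite (negbTE ai0).
by apply: Q1; apply/tQ; exists s; split.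
Qed.

End ASide.


Section Val.
Variable L : fieldType.
Variable V : L -> Prop.
Hypothesis hV : subring V.
Hypothesis vV : forall z : L, z != 0 -> V z \/ V z^-1.

Lemma vmax_add x y : val_max_ideal V x -> val_max_ideal V y -> val_max_ideal V (x + y).
Proof.
move=> [Vx hx] [Vy hy]; split; first exact: (DD hV).
have [->|s0] := eqVneq (x + y) 0; first by left.
right => Vs.
have [x0|x0] := eqVneq x 0.
  by case: hy => [y0|ny]; [by rewrite x0 y0 addr0 eqxx in s0|apply: ny; move: Vs; rewrite x0 add0r].
have [y0|y0] := eqVneq y 0; first by case: hx => [x00|nx]; [move/eqP: x0|apply: nx; move: Vs; rewrite y0 addr0].
have nx : ~ V x^-1 by case: hx => [x00|//]; move/eqP: x0.
have ny : ~ V y^-1 by case: hy => [y00|//]; move/eqP: y0.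
have [H|H] := vV (mulf_neq0 x0 (invr_neq0 y0)).
  apply: ny.
  have -> : y^-1 = (x + y)^-1 * (1 + x / y).
    by field; rewrite y0 s0.
  by apply: (DM hV) => //; apply: (DD hV) => //; apply: (D1 hV).
apply: nx.
have -> : x^-1 = (x + y)^-1 * (1 + (x / y)^-1).
  by field; rewrite ?x0 ?y0 ?s0.
by apply: (DM hV) => //; apply: (DD hV) => //; apply: (D1 hV).
Qed.

Definition Rs (e : nat -> L) (n : nat) (x : L) (j : nat) :=
  \sum_(i < n | (j <= i)%N) e i * x ^+ (i - j).

Lemma pow_div (x : L) k j : x != 0 -> (k <= j)%N -> x ^+ k / x ^+ j = x^-1 ^+ (j - k).
Proof.
move=> x0 kj; rewrite -{1}(subnKC kj) exprD invfM mulrA divff ?mul1r ?exprVn //.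
by rewrite expf_neq0.
Qed.

Lemma Rs_neg (e : nat -> L) n x j : x != 0 -> \sum_(i < n) e i * x ^+ i = 0 ->
  Rs e n x j = - \sum_(i < n | (i < j)%N) e i * x^-1 ^+ (j - i).
Proof.
move=> x0 hs.
have H1 : x ^+ j * Rs e n x j = \sum_(i < n | (j <= i)%N) e i * x ^+ i.
  rewrite /Rs mulr_sumr; apply: eq_bigr => i hi.
  by rewrite mulrCA -exprD subnKC.
have H2 : \sum_(i < n | (j <= i)%N) e i * x ^+ i = - \sum_(i < n | (i < j)%N) e i * x ^+ i.
  apply/eqP; rewrite -addr_eq0; apply/eqP.
  rewrite -[in RHS]hs [in RHS](bigID (fun i : 'I_n => (j <= i)%N)) /=.
  by congr (_ + _); apply: eq_bigl => i; rewrite ltnNge.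
have xj : x ^+ j != 0 by rewrite expf_neq0.
have -> : Rs e n x j = (x ^+ j)^-1 * (x ^+ j * Rs e n x j) by rewrite mulKf.
rewrite H1 H2 mulrN mulr_sumr; congr (- _); apply: eq_bigr => i hi.
by rewrite mulrCA [_^-1 * _]mulrC pow_div // ltnW.
Qed.

Lemma xRs_neg (e : nat -> L) n x j : x != 0 -> \sum_(i < n) e i * x ^+ i = 0 ->
  x * Rs e n x j = - \sum_(i < n | (i < j)%N) e i * x^-1 ^+ (j - i.+1).
Proof.
move=> x0 hs; rewrite Rs_neg // mulrN mulr_sumr; congr (- _); apply: eq_bigr => i hi.
rewrite mulrCA; congr (_ * _).
by rewrite -(subnSK hi) exprS mulrA mulfV // mul1r.
Qed.

Lemma Rs_V (e : nat -> L) n x j : x != 0 -> \sum_(i < n) e i * x ^+ i = 0 ->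
  (forall i, (i < n)%N -> V (e i)) -> V (Rs e n x j) /\ V (x * Rs e n x j).
Proof.
move=> x0 hs He.
have [Vx|Vx] := vV x0.
  have HR : V (Rs e n x j).
    by apply: (Dsum hV) => i _; apply: (DM hV); [apply: He|apply: (DX hV)].
  by split=> //; apply: (DM hV).
split.
  rewrite Rs_neg //; apply: (DN hV); apply: (Dsum hV) => i _.
  by apply: (DM hV); [apply: He|apply: (DX hV)].
rewrite xRs_neg //; apply: (DN hV); apply: (Dsum hV) => i _.
by apply: (DM hV); [apply: He|apply: (DX hV)].
Qed.

Lemma Rs_step (e : nat -> L) n x j : (j < n)%N ->
  Rs e n x j - x * Rs e n x j.+1 = e j.
Proof.
move=> hj; rewrite /Rs (bigD1 (Ordinal hj)) //= subnn expr0 mulr1.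
have -> : \sum_(i < n | (j <= i)%N && (i != Ordinal hj)) e i * x ^+ (i - j) =
          x * \sum_(i < n | (j.+1 <= i)%N) e i * x ^+ (i - j.+1).
  rewrite mulr_sumr.
  have -> : \sum_(i < n | (j <= i)%N && (i != Ordinal hj)) e i * x ^+ (i - j) =
          \sum_(i < n | (j.+1 <= i)%N) e i * x ^+ (i - j).
    apply: eq_bigl => i; rewrite [(j < i)%N]ltn_neqAle -val_eqE /= andbC eq_sym.
    by [].
  apply: eq_bigr => i hi; rewrite mulrCA -exprS; congr (_ * _ ^+ _).
  by rewrite subnS prednK // subn_gt0.
by rewrite addrK.
Qed.

End Val.


Lemma clear_den (L : fieldType) (A : L -> Prop) (hA : subring A) (p : {poly L}) :
  (forall i, qf A p`_i) -> forall m,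
  exists d, [/\ A d, d != 0 & forall i, (i < m)%N -> A (d * p`_i)].
Proof.
move=> Hp; elim=> [|m [d [Ad d0 Hd]]]; first by exists 1; split => //; [apply: (D1 hA)|apply: oner_neq0].
have [u [v [Au [Av [v0 ev]]]]] := Hp m.
exists (d * v); split; [exact: (DM hA)|exact: mulf_neq0|].
move=> i; rewrite ltnS leq_eqVlt => /orP[/eqP->|hi].
  rewrite ev; have -> : d * v * (u / v) = d * u by field.
  exact: (DM hA).
by rewrite mulrAC; apply: (DM hA) => //; apply: Hd.
Qed.

Theorem corollary2p11 (L : fieldType) (A B : L -> Prop) :
  subring A -> subring B ->
  (forall x, A x -> B x) ->
  (forall x : L, qf B x) ->
  algebraic_over (qf A) ->
  PvMD A ->
  integrally_closed B ->
  essential_domain B ->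
  forall Vs : (L -> Prop) -> Prop,
    essential_representation B Vs ->
    (forall V, Vs V -> t_ideal A (fun x => A x /\ val_max_ideal V x)) ->
    PvMD B.
Proof.
move=> hA hB AB qB alg pA _ _ Vs [VsE Brep] Vt.
split=> // M tM x qx x0.
have Vsub : forall V, Vs V -> subring V.
  by move=> V /VsE [[hV _] _].
have VB : forall V, Vs V -> forall z, B z -> V z.
  by move=> V /VsE [[_ [H _]] _].
have vV : forall V, Vs V -> forall z, z != 0 -> V z \/ V z^-1.
  by move=> V /VsE [[_ [_ [_ H]]] _] z z0; apply: H.
have Bin : forall z, (forall V, Vs V -> V z) -> B z.
  by move=> z H; apply/Brep; split.
have [[iM M1] [tMi _]] := tM.
have [MS [M0 [Madd Mmul]]] := iM.
case: tMi => tMi.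
  left; have [u [v [Bu [Bv [v0 ->]]]]] := qB x.
  exists u, v; split => //; split => //; split => //.
  by move/tMi => /eqP; rewrite (negbTE v0).
have [p [p0 [Hp rp]]] := alg x.
have [d [Ad d0 Hd]] := clear_den hA Hp (size p).
pose a i := d * p`_i.
have Ha : forall i, A (a i).
  move=> i; case: (ltnP i (size p)) => hi; first exact: Hd.
  by rewrite /a nth_default // mulr0; apply: (D0 hA).
have nz : exists i, (i < size p)%N /\ a i != 0.
  exists (size p).-1; split; first by rewrite prednK // size_poly_gt0.
  by rewrite /a mulf_neq0 // -/(lead_coef p) lead_coef_eq0.
have hs : \sum_(i < size p) a i * x ^+ i = 0.
  rewrite /a; under eq_bigr do rewrite -mulrA.
  by rewrite -mulr_sumr -horner_coef (eqP rp) mulr0.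
have [ws [Hws HQ]] := A_claim hA pA Ha nz.
pose n := size p.
pose e w i := w * a i.
have hse : forall w, \sum_(i < n) e w i * x ^+ i = 0.
  by move=> w; rewrite /e; under eq_bigr do rewrite -mulrA; rewrite -mulr_sumr hs mulr0.
have RB : forall w, w \in ws -> forall j, B (Rs (e w) n x j) /\ B (x * Rs (e w) n x j).
  move=> w wws j.
  have HV : forall V, Vs V -> V (Rs (e w) n x j) /\ V (x * Rs (e w) n x j).
    move=> V HV; apply: (Rs_V (Vsub V HV) (vV V HV) j x0 (hse w)) => i hi.
    apply: (VB V HV); apply: AB; exact: (proj2 (Hws w wws) i hi).
  by split; apply: Bin => V HV'; have := HV V HV'; case.
apply: NNPP => H.
have MR : forall w, w \in ws -> forall j, M (Rs (e w) n x j) /\ M (x * Rs (e w) n x j).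
  move=> w wws j; have [BR BxR] := RB w wws j; split; apply: NNPP => nM; apply: H.
    left; exists (x * Rs (e w) n x j), (Rs (e w) n x j); split => //; split => //; split => //.
    have R0 : Rs (e w) n x j != 0 by apply/eqP => R0; apply: nM; rewrite R0.
    by rewrite mulfK.
  right; exists (Rs (e w) n x j), (x * Rs (e w) n x j); split => //; split => //; split => //.
  have R0 : x * Rs (e w) n x j != 0 by apply/eqP => R0; apply: nM; rewrite R0.
  have R0' : Rs (e w) n x j != 0 by apply: contraNneq R0 => ->; rewrite mulr0.
  by field; apply/andP.
pose s := [seq Rs (e w) n x j | w <- ws, j <- iota 0 n.+1] ++
          [seq x * Rs (e w) n x j | w <- ws, j <- iota 0 n.+1].
have inR : forall w j, w \in ws -> (j <= n)%N -> Rs (e w) n x j \in s.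
  move=> w j wws hj; rewrite mem_cat; apply/orP; left.
  by apply/allpairsP; exists (w, j); rewrite mem_iota add0n ltnS.
have inxR : forall w j, w \in ws -> (j <= n)%N -> x * Rs (e w) n x j \in s.
  move=> w j wws hj; rewrite mem_cat; apply/orP; right.
  by apply/allpairsP; exists (w, j); rewrite mem_iota add0n ltnS.
apply: M1; apply/tMi; exists s; split.
  move=> y; rewrite mem_cat => /orP[] /allpairsP [[w j] [wws _ ->]] /=; by case: (MR w wws j).
split; first exact: qB.
move=> u /(colon_fg hB) [qu Hu]; rewrite mul1r; apply: Bin => V HV.
pose Q y := A y /\ val_max_ideal V y.
have hV := Vsub V HV.
have [w [i [wws hi nQ]]] : exists w i, [/\ w \in ws, (i < n)%N & ~ Q (w * a i)].
  apply: HQ; last first.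
  - by move=> [_ [_ [H1|H1]]]; [move/eqP: H1; rewrite oner_eq0|apply: H1; rewrite invr1; apply: (D1 hV)].
  - exact: Vt.
  - move=> y z [Ay Vy] [Az Vz]; split; first exact: (DD hA).
    exact: (vmax_add hV (vV V HV)).
  - by split; [apply: (D0 hA)|split; [apply: (D0 hV)|left]].
have Aei : A (e w i) by exact: (proj2 (Hws w wws) i hi).
have Vei : V (e w i) by apply: (VB V HV); apply: AB.
have [ei0 Vinv] : e w i != 0 /\ V (e w i)^-1.
  case: (eqVneq (e w i) 0) => [e0|e0].
    by exfalso; apply: nQ; split => //; split => //; left.
  split => //; apply: NNPP => nV; apply: nQ; split => //; split => //; right; exact: nV.
have Bue : B (u * e w i).
  rewrite -(Rs_step (e w) x hi) mulrBr; apply: (DB hB).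
    by apply: Hu; apply: inR => //; exact: ltnW.
  by apply: Hu; apply: inxR.
have -> : u = (u * e w i) * (e w i)^-1 by rewrite mulfK.
by apply: (DM hV) => //; apply: (VB V HV).
Qed.
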